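(* Let $x_1,\dots,x_n,y_1,\dots,y_n\in\mathbb C$ and define the $n\times n$ matrix $M$ by $$\sum_{k=1}^nM_{jk}u^{k-1}=\prod_{1\le i<j}(u-x_i)\prod_{j<i\le n}(u+y_i),\qquad j=1,\dots,n.$$ Then $\det M=\prod_{1\le i<j\le n}(x_i+y_j)$. *)

(* Defs.v *)
From HB Require Import structures.
From mathcomp Require Import all_boot all_order all_algebra.
From mathcomp Require Import complex.
Set Implicit Arguments. Unset Strict Implicit. Unset Printing Implicit Defensive.
Import Order.TTheory GRing.Theory Num.Theory.
Local Open Scope ring_scope.

(* Indices are 0-based: row j : 'I_n stands for j+1, column k : 'I_n for the
   coefficient of u^k (= u^{(k+1)-1}). *)
Definition rowpoly (F : comRingType) (n : nat) (x y : 'I_n -> F) (j : 'I_n) : {poly F} :=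
  (\prod_(i < n | (i < j)%N) ('X - (x i)%:P)) * (\prod_(i < n | (j < i)%N) ('X + (y i)%:P)).

Definition Mmat (F : comRingType) (n : nat) (x y : 'I_n -> F) : 'M[F]_n :=
  \matrix_(j < n, k < n) (rowpoly x y j)`_k.

(* Main.v *)
Require Import Defs.
From HB Require Import structures.
From mathcomp Require Import all_boot all_order all_algebra.
From mathcomp Require Import complex.
From mathcomp Require Import ring.
Import Order.TTheory GRing.Theory Num.Theory.
Local Open Scope ring_scope.

Lemma size_rowpoly (F : fieldType) n (x y : 'I_n -> F) j :
  (size (rowpoly x y j) <= n)%N.
Proof.
pose G (i : 'I_n) := if (i < j)%N then 'X - (x i)%:P else 'X - (- y i)%:P.
have -> : rowpoly x y j = \prod_(i | i != j) G i.
  rewrite (bigID (fun i : 'I_n => (i < j)%N)) /= /rowpoly; congr (_ * _).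
    apply: eq_big => i.
      apply/idP/idP => [h|/andP[]//]; rewrite h andbT; apply/eqP => e.
      by rewrite e ltnn in h.
    by rewrite /G => ->.
  apply: eq_big => i.
    apply/idP/idP => [h|/andP[h1 h2]].
      rewrite -leqNgt ltnW // andbT.
      by apply/eqP => e; rewrite e ltnn in h.
    rewrite -leqNgt in h2; rewrite ltn_neqAle h2 andbT.
    by rewrite eq_sym -val_eqE in h1.
  by move=> h; rewrite /G ltnNge ltnW //= polyCN opprK.
rewrite size_prod; last by move=> i _; rewrite /G; case: ifP => _; rewrite polyXsubC_eq0.
have -> : (\sum_(i | i != j) size (G i) = \sum_(i | i != j) 2)%N.
  by apply: eq_bigr => i _; rewrite /G; case: ifP => _; rewrite size_XsubC.
rewrite sum_nat_const.
have -> : #|[pred i | i != j]| = n.-1 by rewrite (cardC1 j) card_ord.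
case: n x y j G => [|n] x y j; first by case: j.
by rewrite /= muln2 -addnn -addSn addnK.
Qed.
Lemma rowpoly_lift (F : fieldType) n (x y : 'I_n.+1 -> F) (j : 'I_n) :
  rowpoly x y (lift ord0 j) =
  rowpoly (fun i => x (lift ord0 i)) (fun i => y (lift ord0 i)) j * ('X - (x ord0)%:P).
Proof.
rewrite /rowpoly (big_mkcond (fun i : 'I_n.+1 => (i < lift ord0 j)%N))
  (big_mkcond (fun i : 'I_n.+1 => (lift ord0 j < i)%N)) !big_ord_recl /=.
rewrite (big_mkcond (fun i : 'I_n => (i < j)%N)) (big_mkcond (fun i : 'I_n => (j < i)%N)) mul1r.
by rewrite [_ * ('X - _)]mulrC -!mulrA; congr (_ * (_ * _)).
Qed.

Lemma rowpoly0 (F : fieldType) n (x y : 'I_n.+1 -> F) :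
  rowpoly x y ord0 = \prod_(i < n) ('X + (y (lift ord0 i))%:P).
Proof.
rewrite /rowpoly big_pred0 // mul1r big_mkcond big_ord_recl /= mul1r.
by apply: eq_bigr.
Qed.

Lemma sum_coef (F : fieldType) n (p : {poly F}) m :
  (size p <= n)%N -> \sum_(k < n) p`_k * ((k : nat) == m)%:R = p`_m.
Proof.
move=> hs.
have -> : p`_m = (\poly_(k < n) p`_k)`_m.
  rewrite coef_poly; case: ltnP => // h; rewrite nth_default //.
  exact: leq_trans hs h.
rewrite poly_def coef_sum; apply: eq_bigr => k _.
by rewrite coefZ coefXn eq_sym.
Qed.

Lemma det_Mmat (F : fieldType) n (x y : 'I_n -> F) :
  \det (Mmat x y) = \prod_(i < n) \prod_(j < n | (i < j)%N) (x i + y j).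
Proof.
elim: n x y => [|n IH] x y; first by rewrite det_mx00 big_ord0.
set x0 := x ord0.
pose D := 'X - x0%:P.
pose Q j := rowpoly x y j %/ D.
pose c j := (rowpoly x y j).[x0].
have hD : D != 0 by rewrite polyXsubC_eq0.
have eqPQ j : rowpoly x y j = Q j * D + (c j)%:P.
  by rewrite /Q /c -modp_XsubC -divp_eq.
have szQ j : (size (Q j) <= n)%N.
  by rewrite size_divp // size_XsubC leq_subLR; exact: size_rowpoly.
pose N := \matrix_(j < n.+1, k < n.+1)
  (if (k : nat) is k'.+1 then (Q j)`_k' else c j) : 'M[F]_n.+1.
pose T := \matrix_(k < n.+1, l < n.+1)
  (((k : nat) == l)%:R - x0 * ((k : nat) == l.+1)%:R) : 'M[F]_n.+1.
have MNT : Mmat x y = N *m T.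
  apply/matrixP => j l; rewrite !mxE big_ord_recl !mxE /=.
  under eq_bigr => k _ do rewrite !mxE /=.
  rewrite eqPQ /D mulrBr coefD coefB coefMX coefMC coefC.
  under eq_bigr => k _ do rewrite mulrBr.
  rewrite sumrB.
  under [X in _ = _ + (_ - X)]eq_bigr => k _ do rewrite mulrCA.
  rewrite -mulr_sumr sum_coef //.
  case: l => [[|l'] hl] /=.
    rewrite big1 => [|k _]; last by rewrite mulr0.
    ring.
  under eq_bigr => k _ do rewrite add0n /bump leq0n add1n eqSS.
  rewrite sum_coef //; ring.
have detT : \det T = 1.
  rewrite det_trig; last first.
    apply/forallP => i; apply/forallP => k; apply/implyP => h; rewrite mxE.
    by rewrite (ltn_eqF h) (ltn_eqF (ltn_trans h (ltnSn k))) mulr0 subr0.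
  by rewrite big1 // => i _; rewrite mxE eqxx (ltn_eqF (ltnSn i)) mulr0 subr0.
have detN : \det N = c ord0 * \det (Mmat (fun i => x (lift ord0 i)) (fun i => y (lift ord0 i))).
  rewrite (expand_det_col N ord0) big_ord_recl big1 ?addr0; last first.
    move=> i _; rewrite mxE /c rowpoly_lift hornerM hornerXsubC subrr mulr0 mul0r //.
  rewrite /cofactor mxE /= expr0 mul1r; congr (_ * \det _).
  by apply/matrixP => i k; rewrite !mxE /= /Q rowpoly_lift mulpK.
rewrite MNT det_mulmx detT mulr1 detN IH /c rowpoly0 horner_prod.
rewrite big_ord_recl; congr (_ * _).
  rewrite [RHS]big_mkcond big_ord_recl /= mul1r; apply: eq_bigr => i _.
  by rewrite hornerD hornerX hornerC.
apply: eq_bigr => i _.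
rewrite [RHS]big_mkcond big_ord_recl /= mul1r big_mkcond; apply: eq_bigr => k _ //.
Qed.

Theorem lemma5p2 (R : rcfType) (n : nat) (x y : 'I_n -> R[i]) :
  \det (Mmat x y) = \prod_(i < n) \prod_(j < n | (i < j)%N) (x i + y j).
Proof. exact: det_Mmat. Qed.
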